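(* Let $Q$ be a quiver with no oriented cycles, $\theta\in\mathbb{Z}^{Q_0}$ a weight with $\nabla(Q,\theta)\ne\emptyset$, and $a\in Q_1$ an arrow such that the quiver $\hat Q$ obtained by contracting $a$ has no oriented cycles. Then for all sufficiently large integers $d$ the arrow $a$ is contractable for the pair $(Q,\theta+d(\varepsilon_{a^+}-\varepsilon_{a^-}))$, where $\varepsilon_v\in\mathbb{Z}^{Q_0}$ is the characteristic function of the vertex $v$.
   Context: A quiver $Q$: vertices $Q_0$, arrows $Q_1$, $a$ from $a^-$ to $a^+$. $\nabla(Q,\theta)=\{x\in\mathbb{R}_{\ge0}^{Q_1}\mid\forall v:\ \theta(v)=\sum_{a^+=v}x(a)-\sum_{a^-=v}x(a)\}$. Contracting a non-loop arrow $a$ of $(Q,\psi)$ gives $(\hat Q,\hat\psi)$: delete $a$, glue $a^-$ and $a^+$ to one vertex $v$, $\hat\psi(v)=\psi(a^-)+\psi(a^+)$, $\hat\psi=\psi$ elsewhere. The arrow $a$ is contractable for $(Q,\psi)$ if $\nabla(Q,\psi)$ and $\nabla(\hat Q,\hat\psi)$ are integral-affinely equivalent: there is an affine isomorphism between their affine spans mapping lattice points of one span (lattices $\mathbb{Z}^{Q_1}$, $\mathbb{Z}^{\hat Q_1}$) onto lattice points of the other and one polyhedron onto the other. *)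

(* Defs.v *)
From HB Require Import structures.
From mathcomp Require Import all_boot all_order all_algebra.
From mathcomp Require Import reals.
Set Implicit Arguments. Unset Strict Implicit. Unset Printing Implicit Defensive.
Import Order.TTheory GRing.Theory Num.Theory.
Local Open Scope ring_scope.

(* A finite quiver: vertex set qV, arrow set qA, arrow b goes from qs b (= b^-)
   to qt b (= b^+). *)
Record quiver := Quiver {
  qV : finType; qA : finType; qs : qA -> qV; qt : qA -> qV }.

Definition acyclic (Q : quiver) : Prop :=
  ~ exists (b : qA Q) (p : seq (qA Q)),
      path (fun x y => qt x == qs y) b p && (qt (last b p) == qs b).

Definition nabla (R : realType) (Q : quiver) (theta : qV Q -> int)
    (x : {ffun qA Q -> R}) : Prop :=
  (forall b, 0 <= x b) /\
  forall v, (theta v)%:~R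
            = \sum_(b | qt b == v) x b - \sum_(b | qs b == v) x b.

Definition aff_span (R : realType) (A : finType) (S : {ffun A -> R} -> Prop)
    (x : {ffun A -> R}) : Prop :=
  exists n (c : 'I_n -> R) (p : 'I_n -> {ffun A -> R}),
    (forall i, S (p i)) /\ \sum_i c i = 1 /\ forall b, x b = \sum_i c i * p i b.

Definition lattice_pt (R : realType) (A : finType) (x : {ffun A -> R}) : Prop :=
  forall b, x b \is a Num.int.

Definition affine_map (R : realType) (A B : finType)
    (f : {ffun A -> R} -> {ffun B -> R}) : Prop :=
  exists (L : {ffun A -> R} -> {ffun B -> R}) (c : {ffun B -> R}),
    (forall k (x y : {ffun A -> R}), L [ffun b => k * x b + y b]
                   = [ffun b' => k * L x b' + L y b']) /\
    forall x b', f x b' = L x b' + c b'.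

(* Integral-affine equivalence of P in R^A and P' in R^B: an affine
   isomorphism between the affine spans (restriction of an affine map of the
   ambient spaces), mapping lattice points of one span onto lattice points of
   the other, and P onto P'. *)
Definition int_aff_equiv (R : realType) (A B : finType)
    (P : {ffun A -> R} -> Prop) (P' : {ffun B -> R} -> Prop) : Prop :=
  exists f : {ffun A -> R} -> {ffun B -> R},
    affine_map f /\
    [/\ (forall x, aff_span P x -> aff_span P' (f x)),
        (forall x y, aff_span P x -> aff_span P y -> f x = f y -> x = y),
        (forall y, aff_span P' y -> exists2 x, aff_span P x & f x = y),
        (forall x, aff_span P x -> (lattice_pt x <-> lattice_pt (f x)))
      & (forall x, aff_span P x -> (P x <-> P' (f x)))].

(* Contraction of a non-loop arrow a (Ha : a^- != a^+): delete a, glue a^-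
   into a^+.  The vertices of the contracted quiver are the vertices other
   than a^-; the glued vertex is represented by a^+. *)
Section Contract.
Variables (Q : quiver) (a : qA Q) (Ha : qs a != qt a).

Definition cV := {v : qV Q | v != qs a}.
Definition cA := {b : qA Q | b != a}.

Lemma ta_ne : qt a != qs a. Proof. by rewrite eq_sym. Qed.

Definition glue (v : qV Q) : cV :=
  if insub v is Some w then w else exist _ (qt a) ta_ne.

Definition contract : quiver :=
  @Quiver cV cA (fun b => glue (qs (val b))) (fun b => glue (qt (val b))).

Definition contract_weight (psi : qV Q -> int) (v : cV) : int :=
  psi (val v) + (if val v == qt a then psi (qs a) else 0).
End Contract.

Definition contractable (R : realType) (Q : quiver) (a : qA Q)
    (Ha : qs a != qt a) (psi : qV Q -> int) : Prop :=
  int_aff_equiv (@nabla R Q psi)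
                (@nabla R (contract Ha) (@contract_weight Q a psi)).

Definition shift_weight (Q : quiver) (theta : qV Q -> int) (a : qA Q) (d : int)
    (v : qV Q) : int :=
  theta v + d * ((v == qt a)%:R - (v == qs a)%:R).

(* Main.v *)
Require Import Defs.
From HB Require Import structures.
From mathcomp Require Import all_boot all_order all_algebra.
From mathcomp Require Import reals.
Import Order.TTheory GRing.Theory Num.Theory.
Set Implicit Arguments. Unset Strict Implicit. Unset Printing Implicit Defensive.
Local Open Scope ring_scope.

Lemma sum_split (R : realType) (Q : quiver) (a : qA Q) (G : qA Q -> R) :
  \sum_(b : qA Q) G b = G a + \sum_(b : cA a) G (val b).
Proof.
rewrite (bigD1 a) //=; congr (_ + _).
rewrite (reindex_omap (val : cA a -> qA Q) insub); last first.
  by move=> i ia; rewrite insubT.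
by apply: eq_bigl=> -[i ia]/=; rewrite insubT ?ia /= ?eqxx ?andbT.
Qed.

Lemma consE (R : realType) (Q : quiver) (x : {ffun qA Q -> R}) v :
  \sum_(b | qt b == v) x b - \sum_(b | qs b == v) x b =
  \sum_b (((qt b == v)%:R - (qs b == v)%:R) * x b).
Proof.
rewrite !(big_mkcond (fun b => _ == _)) -sumrB; apply: eq_bigr => b _.
by case: (qt b == v); case: (qs b == v); rewrite /= ?subr0 ?sub0r ?subrr ?mul1r ?mul0r ?mulN1r.
Qed.

Definition erel (Q : quiver) : rel (qA Q) := fun x y => qt x == qs y.

Definition pot (Q : quiver) (v : qV Q) : nat :=
  #|[set c | [exists b, (qt b == v) && connect (@erel Q) c b]]|.

Lemma pot_lt (Q : quiver) : acyclic Q -> forall b, (@pot Q (qs b) < @pot Q (qt b))%N.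
Proof.
move=> ac b; apply: proper_card; apply/properP; split.
  apply/subsetP => c; rewrite !inE => /existsP [b' /andP [/eqP Hb' Hc]].
  apply/existsP; exists b; rewrite eqxx /=.
  by apply: connect_trans Hc _; apply: connect1; rewrite /erel Hb'.
exists b; rewrite !inE; first by apply/existsP; exists b; rewrite eqxx connect0.
apply/negP => /existsP [b' /andP [/eqP Hb' /connectP [p Hp Hl]]].
apply: ac; exists b, p; rewrite Hp /= -Hl Hb' eqxx //.
Qed.

Lemma flow_bound (R : realType) (Q : quiver) (w : qV Q -> int)
   (y : {ffun qA Q -> R}) : acyclic Q -> nabla w y ->
   \sum_b y b <= ((\sum_v (pot v)%:Z * w v)%R)%:~R.
Proof.
move=> ac [H0 Hc].
have -> : ((\sum_v (pot v)%:Z * w v)%R)%:~R =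
   \sum_v (pot v)%:R * \sum_b (((qt b == v)%:R - (qs b == v)%:R) * y b) :> R.
  rewrite rmorph_sum /=; apply: eq_bigr => v _.
  by rewrite rmorphM /= Hc consE.
rewrite [leRHS](eq_bigr (fun v => \sum_b (pot v)%:R * (((qt b == v)%:R - (qs b == v)%:R) * y b))); last by move=> v _; rewrite mulr_sumr.
rewrite exchange_big /=; apply: ler_sum => b _.
have -> : \sum_v (pot v)%:R * (((qt b == v)%:R - (qs b == v)%:R) * y b)
    = ((pot (qt b))%:R - (pot (qs b))%:R) * y b :> R.
  under eq_bigr do rewrite mulrA mulrBr mulrBl.
  rewrite sumrB mulrBl; congr (_ - _).
    rewrite (bigD1 (qt b)) //= eqxx mulr1 big1 ?addr0 // => v /negbTE.
    by rewrite eq_sym => ->; rewrite mulr0 mul0r.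
  rewrite (bigD1 (qs b)) //= eqxx mulr1 big1 ?addr0 // => v /negbTE.
  by rewrite eq_sym => ->; rewrite mulr0 mul0r.
rewrite -natrB; last exact: ltnW (pot_lt ac b).
rewrite -[leLHS]mul1r ler_wpM2r // ler1n subn_gt0; exact: pot_lt.
Qed.

From mathcomp Require Import ring lra zify.

Section Main.
Variables (R : realType) (Q : quiver) (a : qA Q) (Ha : qs a != qt a).

Local Notation s := (qs a).
Local Notation t := (qt a).
Local Notation Qh := (contract Ha).

Definition coef (v : qV Q) (b : qA Q) : R := (qt b == v)%:R - (qs b == v)%:R.
Definition cons (z : {ffun qA Q -> R}) v := \sum_b coef v b * z b.

Lemma sne : (s == t) = false. Proof. exact: negbTE Ha. Qed.
Lemma tne : (t == s) = false. Proof. by rewrite eq_sym sne. Qed.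

Lemma val_glue u : val (glue Ha u) = if u == s then t else u.
Proof.
rewrite /glue; case: insubP => [w Hw ->|]; first by rewrite (negbTE Hw).
by move/negbNE => ->.
Qed.

Lemma glue_eq u (vh : cV a) :
  ((glue Ha u == vh)%:R : R) = (u == val vh)%:R + (val vh == t)%:R * (u == s)%:R.
Proof.
have vs : (val vh == s) = false by apply: negbTE (valP vh).
rewrite -val_eqE val_glue; case: (u =P s) => [->|ns].
  by rewrite (eq_sym s) vs add0r mulr1 eq_sym.
by rewrite mulr0 addr0.
Qed.

Lemma hat_sum (z : {ffun qA Q -> R}) (vh : cV a) :
  \sum_(b : qA Qh) (((qt b == vh)%:R - (qs b == vh)%:R) * z (val b))
  = cons z (val vh) + (val vh == t)%:R * cons z s.
Proof.
have vs : (val vh == s) = false by apply: negbTE (valP vh).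
rewrite /cons mulr_sumr -big_split /= (sum_split a) /=.
rewrite [X in _ = X + _](_ : _ = 0); last first.
  by rewrite /coef eqxx tne (eq_sym s) vs (eq_sym t); case: (_ == t); rewrite /=; ring.
rewrite add0r; apply: eq_bigr => b _.
rewrite /= !glue_eq /coef; ring.
Qed.

Variable psi : qV Q -> int.

Definition consQ (x : {ffun qA Q -> R}) := forall v, (psi v)%:~R = cons x v.
Definition consH (y : {ffun cA a -> R}) := forall vh : cV a,
  ((contract_weight psi vh))%:~R =
  \sum_(b : qA Qh) (((qt b == vh)%:R - (qs b == vh)%:R) * y b).

Definition fproj (x : {ffun qA Q -> R}) : {ffun cA a -> R} := [ffun b => x (val b)].
Definition alpha (y : {ffun cA a -> R}) : R :=
  (psi t)%:~R - \sum_(b : cA a) coef t (val b) * y b.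
Definition lift (y : {ffun cA a -> R}) : {ffun qA Q -> R} :=
  [ffun b => if insub b is Some b' then y b' else alpha y].

Lemma lift_a y : lift y a = alpha y.
Proof. by rewrite ffunE insubF // eqxx. Qed.
Lemma lift_val y b : lift y (val b) = y b.
Proof. by rewrite ffunE valK. Qed.
Lemma fproj_lift y : fproj (lift y) = y.
Proof. by apply/ffunP => b; rewrite ffunE lift_val. Qed.

Lemma cons_t_split z : cons z t = z a + \sum_(b : cA a) coef t (val b) * z (val b).
Proof. by rewrite /cons (sum_split a) /coef eqxx sne subr0 mul1r. Qed.

Lemma K2 x : consQ x -> consH (fproj x).
Proof.
move=> H vh; under eq_bigr do rewrite ffunE.
rewrite hat_sum -!H /contract_weight; case: (val vh == t).
  by rewrite rmorphD mul1r.
by rewrite mul0r addr0 addr0.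
Qed.

Lemma K3 y : consH y -> consQ (lift y).
Proof.
move=> H.
have Ht : (psi t)%:~R = cons (lift y) t.
  rewrite cons_t_split lift_a /alpha.
  have -> : \sum_(b : cA a) coef t (val b) * lift y (val b) = \sum_(b : cA a) coef t (val b) * y b.
    by apply: eq_bigr => b _; rewrite lift_val.
  ring.
have E (vh : cV a) : ((contract_weight psi vh))%:~R
      = cons (lift y) (val vh) + (val vh == t)%:R * cons (lift y) s.
  rewrite (H vh) -hat_sum; apply: eq_bigr => b _; by rewrite lift_val.
move=> v; case: (v =P s) => [->|ns].
  have := E (exist _ t (ta_ne Ha)); rewrite /contract_weight /= eqxx -Ht mul1r rmorphD.
  by move/addrI.
have := E (exist _ v (introN eqP ns)); rewrite /contract_weight /=.
case: (v =P t) => [->|nt]; first by [].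
by rewrite addr0 mul0r addr0.
Qed.

Lemma K4 x : consQ x -> x a = alpha (fproj x).
Proof.
move=> H; rewrite /alpha H cons_t_split; under [X in _ = _ - X]eq_bigr do rewrite ffunE.
ring.
Qed.


Local Notation Ph := (@nabla R Qh (@contract_weight Q a psi)).
Local Notation PQ := (@nabla R Q psi).

Lemma nablaQ x : PQ x <-> (forall b, 0 <= x b) /\ consQ x.
Proof.
split=> -[H0 H]; split=> // v; rewrite H; [by rewrite consE | by rewrite consE].
Qed.

Lemma nablaH y : Ph y <-> (forall b, 0 <= y b) /\ consH y.
Proof.
split=> -[H0 H]; split=> // v; rewrite H; [by rewrite consE | by rewrite consE].
Qed.

Lemma aff_cons x : aff_span (PQ) x -> consQ x.
Proof.
case=> n [c [p [Hp [Hc Hx]]]] v.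
rewrite /cons; under eq_bigr do rewrite Hx mulr_sumr.
rewrite exchange_big /=.
transitivity (\sum_i c i * (psi v)%:~R); first by rewrite -mulr_suml Hc mul1r.
apply: eq_bigr => i _; have /nablaQ [_ Hi] := Hp i.
rewrite (Hi v) /cons mulr_sumr; apply: eq_bigr => b _; ring.
Qed.

Hypothesis Hal : forall y, Ph y -> 0 <= alpha y.

Lemma P1 x : aff_span (PQ) x -> aff_span (Ph) (fproj x).
Proof.
case=> n [c [p [Hp [Hc Hx]]]]; exists n, c, (fun i => fproj (p i)); split=> //.
  move=> i; have /nablaQ [H0 H] := Hp i; apply/nablaH; split; last exact: K2.
  by move=> b; rewrite ffunE.
split=> // b; rewrite ffunE Hx; apply: eq_bigr => i _; by rewrite ffunE.
Qed.

Lemma P2 x y : aff_span (PQ) x -> aff_span (PQ) y -> fproj x = fproj y -> x = y.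
Proof.
move=> /aff_cons Hx /aff_cons Hy E; apply/ffunP => b.
case: (b =P a) => [->|nb]; first by rewrite (K4 Hx) (K4 Hy) E.
have nb' : b != a by apply/eqP.
have := congr1 (fun f : {ffun cA a -> R} => f (Sub b nb')) E; by rewrite !ffunE.
Qed.

Lemma lift_nabla y : Ph y -> PQ (lift y).
Proof.
move=> Hy; have /nablaH [H0 H] := Hy; apply/nablaQ; split; last exact: K3.
move=> b; rewrite ffunE; case: insub => [b'|] //; exact: Hal.
Qed.

Lemma P3 y : aff_span (Ph) y ->
  exists2 x, aff_span (PQ) x & fproj x = y.
Proof.
case=> n [c [p [Hp [Hc Hy]]]].
exists [ffun b => \sum_i c i * lift (p i) b].
  exists n, c, (fun i => lift (p i)); split; first by move=> i; apply: lift_nabla.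
  by split=> // b; rewrite ffunE.
apply/ffunP => b; rewrite !ffunE Hy; apply: eq_bigr => i _; by rewrite lift_val.
Qed.

Lemma P4 x : aff_span (PQ) x -> (lattice_pt x <-> lattice_pt (fproj x)).
Proof.
move=> /aff_cons Hx; split=> H b; first by rewrite ffunE.
case: (b =P a) => [->|nb].
  rewrite (K4 Hx) /alpha; apply: rpredB; first exact: intr_int.
  apply: rpred_sum => b' _; apply: rpredM; last exact: H.
  by apply: rpredB; apply: natr_int.
have nb' : b != a by apply/eqP.
by have := H (Sub b nb'); rewrite ffunE.
Qed.

Lemma P5 x : aff_span (PQ) x -> (PQ x <-> Ph (fproj x)).
Proof.
move=> /aff_cons Hx; split.
  move=> /nablaQ [H0 _]; apply/nablaH; split; last exact: K2.
  by move=> b; rewrite ffunE.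
move=> Hy; have /nablaH [H0 _] := Hy; apply/nablaQ; split=> // b.
case: (b =P a) => [->|nb]; first by rewrite (K4 Hx); apply: Hal.
have nb' : b != a by apply/eqP.
by have := H0 (Sub b nb'); rewrite ffunE.
Qed.

End Main.

Theorem proposition4p21 (R : realType) (Q : quiver) (theta : qV Q -> int)
  (a : qA Q) (Ha : qs a != qt a) :
  acyclic Q ->
  (exists x, @nabla R Q theta x) ->
  acyclic (contract Ha) ->
  exists d0 : int, forall d : int, d0 <= d ->
    @contractable R Q a Ha (shift_weight theta a d).
Proof.
move=> _ _ acH.
pose M : int := \sum_v (@pot (contract Ha) v)%:Z * contract_weight theta v.
exists (M - theta (qt a)) => d Hd.
pose psi := shift_weight theta a d.
have Hw (v : cV a) : contract_weight psi v = contract_weight theta v.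
  have vs : (val v == qs a) = false by apply: negbTE (valP v).
  rewrite /contract_weight /psi /shift_weight vs.
  case: (val v =P qt a) => [->|nt]; last first.
    by rewrite /= subrr mulr0 !addr0.
  rewrite eqxx (negbTE Ha) /=; ring.
have Hal : forall y, @nabla R (contract Ha) (contract_weight psi) y -> 0 <= @alpha R Q a psi y.
  move=> y Hy; have HB := flow_bound acH Hy.
  have HM : \sum_v (@pot (contract Ha) v)%:Z * contract_weight psi v = M.
    by apply: eq_bigr => v _; rewrite Hw.
  rewrite HM in HB.
  have Hpt : psi (qt a) = theta (qt a) + d.
    by rewrite /psi /shift_weight eqxx (eq_sym (qt a)) (negbTE Ha) /= subr0 mulr1.
  have [H0 _] := Hy.
  have Hs : \sum_(b : cA a) @coef R Q (qt a) (val b) * y b <= \sum_(b : cA a) y b.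
    apply: ler_sum => b _; rewrite -[leRHS]mul1r ler_wpM2r // /coef.
    by case: (_ == _); case: (_ == _); rewrite /=; lra.
  rewrite /alpha subr_ge0 (le_trans Hs) // (le_trans HB) //.
  rewrite Hpt ler_int.
  by move: Hd; lia.
exists (@fproj R Q a); split.
  exists (@fproj R Q a), [ffun _ => 0]; split => [k x y|x b]; last by rewrite !ffunE addr0.
  by apply/ffunP => b; rewrite !ffunE.
split.
- exact: (@P1 R Q a Ha psi).
- exact: (@P2 R Q a Ha psi).
- exact: (@P3 R Q a Ha psi Hal).
- exact: (@P4 R Q a Ha psi).
- exact: (@P5 R Q a Ha psi Hal).
Qed.
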